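(* Let $n,m,p$ be positive integers and $A\in\mathbb{R}^{n\times n}$, $B\in\mathbb{R}^{n\times m}$, $C\in\mathbb{R}^{p\times n}$, $D\in\mathbb{R}^{p\times m}$ with $DD^T$ positive definite and $BD^T=0$. Assume $(A,B)$ is reachable and $(A,C)$ is observable, and let $N\ge n$ be an integer. Then there exists $\phi_N$ with $0<\phi_N<\tilde\phi_N$ such that for every symmetric $\bar\Phi\in\mathbb{R}^{nN\times nN}$ with $0\le\bar\Phi\le\phi_NI_{nN}$, the matrices $\Omega_{\bar\Phi}$ and $W_{\bar\Phi}$ are positive definite.
   Context: $\le$ is the Loewner order on symmetric matrices; $\sigma_1(M)$ is the largest singular value. Reachability of $(A,B)$ means $\mathrm{rank}[B\ AB\ \cdots\ A^{n-1}B]=n$; observability of $(A,C)$ means $(A^T,C^T)$ is reachable. Block matrices: $\mathcal{R}_N=[B\ AB\ \cdots\ A^{N-1}B]$; $\mathcal{O}_N$ the block column with blocks (top to bottom) $CA^{N-1},\dots,CA,C$; $\mathcal{O}_N^R$ the block column with blocks $A^{N-1},\dots,A,I_n$; $\mathcal{D}_N=I_N\otimes D$; $\mathcal{H}_N$ the $N\times N$ block matrix with $(i,j)$ block $CA^{j-i-1}B$ for $j>i$ and $0$ otherwise; $\mathcal{L}_N$ the $N\times N$ block matrix with $(i,j)$ block $A^{j-i-1}B$ for $j>i$ and $0$ otherwise. Define $\mathcal{J}_N=\mathcal{O}_N^R-\mathcal{L}_N\mathcal{H}_N^T(\mathcal{D}_N\mathcal{D}_N^T+\mathcal{H}_N\mathcal{H}_N^T)^{-1}\mathcal{O}_N$,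 $\Omega_N=\mathcal{O}_N^T(\mathcal{D}_N\mathcal{D}_N^T+\mathcal{H}_N\mathcal{H}_N^T)^{-1}\mathcal{O}_N$, $M_N=\mathcal{L}_N(I_{Nm}+\mathcal{H}_N^T(\mathcal{D}_N\mathcal{D}_N^T)^{-1}\mathcal{H}_N)^{-1}\mathcal{L}_N^T$, and $\tilde\phi_N=1/\sigma_1(M_N)$ (with $1/0=+\infty$). For symmetric $\bar\Phi$ with $0\le\bar\Phi<\tilde\phi_NI_{nN}$: $S_{\bar\Phi}^{-1}:=-(I_{nN}-\bar\Phi M_N)^{-1}\bar\Phi$ (this equals $(-\bar\Phi^{-1}+M_N)^{-1}$ when $\bar\Phi$ is invertible), $\Omega_{\bar\Phi}=\Omega_N+\mathcal{J}_N^TS_{\bar\Phi}^{-1}\mathcal{J}_N$, $\mathcal{Q}_{\bar\Phi}=(I_{Nm}+\mathcal{H}_N^T(\mathcal{D}_N\mathcal{D}_N^T)^{-1}\mathcal{H}_N-\mathcal{L}_N^T\bar\Phi\mathcal{L}_N)^{-1}$, and $W_{\bar\Phi}=\mathcal{R}_N\mathcal{Q}_{\bar\Phi}\mathcal{R}_N^T$. *)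

(* Defs.v *)
From HB Require Import structures.
From mathcomp Require Import all_boot all_order all_algebra.
From mathcomp Require Import boolp classical_sets reals constructive_ereal.
Set Implicit Arguments.
Unset Strict Implicit.
Unset Printing Implicit Defensive.
Import Order.TTheory GRing.Theory Num.Theory.
Local Open Scope ring_scope.

Section Defs.
Variable R : realType.

Lemma sum_const_ord (N a : nat) : (\sum_(i < N) a)%N = (N * a)%N.
Proof. by rewrite sum_nat_const card_ord. Qed.

Definition blockmx (N a b : nat) (F : 'I_N -> 'I_N -> 'M[R]_(a, b)) : 'M[R]_(N * a, N * b) :=
  castmx (sum_const_ord N a, sum_const_ord N b)
    (@mxblock R N N (fun _ => a) (fun _ => b) F).

Definition blockcol (N a b : nat) (F : 'I_N -> 'M[R]_(a, b)) : 'M[R]_(N * a, b) :=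
  castmx (sum_const_ord N a, erefl b) (@mxcol R N (fun _ => a) b F).

Definition blockrow (N a b : nat) (F : 'I_N -> 'M[R]_(a, b)) : 'M[R]_(a, N * b) :=
  castmx (erefl a, sum_const_ord N b) (@mxrow R N (fun _ => b) a F).

Definition symmx k (M : 'M[R]_k) := M^T = M.
Definition psd k (M : 'M[R]_k) :=
  symmx M /\ forall x : 'cV[R]_k, 0 <= (x^T *m M *m x) 0 0.
Definition posdef k (M : 'M[R]_k) :=
  symmx M /\ forall x : 'cV[R]_k, x != 0 -> 0 < (x^T *m M *m x) 0 0.
Definition loewner_le k (M1 M2 : 'M[R]_k) := psd (M2 - M1).

Definition sigma1 a b (M : 'M[R]_(a, b)) : R :=
  sup [set s : R | exists e : R, eigenvalue (M^T *m M) e /\ s = Num.sqrt e].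

Variables (n m p : nat) (A : 'M[R]_n) (B : 'M[R]_(n, m)) (C : 'M[R]_(p, n))
  (D : 'M[R]_(p, m)).

Definition Rcal N : 'M[R]_(n, N * m) := blockrow (fun j : 'I_N => A ^+ j *m B).
Definition Ocal N : 'M[R]_(N * p, n) := blockcol (fun i : 'I_N => C *m A ^+ (N - 1 - i)).
Definition OcalR N : 'M[R]_(N * n, n) := blockcol (fun i : 'I_N => A ^+ (N - 1 - i)).
Definition Dcal N : 'M[R]_(N * p, N * m) :=
  blockmx (fun i j : 'I_N => if i == j then D else 0).
Definition Hcal N : 'M[R]_(N * p, N * m) :=
  blockmx (fun i j : 'I_N => if (i < j)%N then C *m A ^+ (j - i - 1) *m B else 0).
Definition Lcal N : 'M[R]_(N * n, N * m) :=
  blockmx (fun i j : 'I_N => if (i < j)%N then A ^+ (j - i - 1) *m B else 0).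

Definition Gcal N : 'M[R]_(N * p) :=
  invmx (Dcal N *m (Dcal N)^T + Hcal N *m (Hcal N)^T).

Definition Jcal N : 'M[R]_(N * n, n) :=
  OcalR N - Lcal N *m (Hcal N)^T *m Gcal N *m Ocal N.
Definition OmegaN N : 'M[R]_n := (Ocal N)^T *m Gcal N *m Ocal N.
Definition Kcal N : 'M[R]_(N * m) :=
  1%:M + (Hcal N)^T *m invmx (Dcal N *m (Dcal N)^T) *m Hcal N.
Definition Mcal N : 'M[R]_(N * n) := Lcal N *m invmx (Kcal N) *m (Lcal N)^T.

Definition phitilde N : \bar R :=
  if sigma1 (Mcal N) == 0 then +oo%E else ((sigma1 (Mcal N))^-1)%:E.

Definition Sinv N (Phi : 'M[R]_(N * n)) : 'M[R]_(N * n) :=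
  - (invmx (1%:M - Phi *m Mcal N) *m Phi).
Definition OmegaPhi N (Phi : 'M[R]_(N * n)) : 'M[R]_n :=
  OmegaN N + (Jcal N)^T *m Sinv Phi *m Jcal N.
Definition Qcal N (Phi : 'M[R]_(N * n)) : 'M[R]_(N * m) :=
  invmx (Kcal N - (Lcal N)^T *m Phi *m Lcal N).
Definition Wcal N (Phi : 'M[R]_(N * n)) : 'M[R]_n :=
  Rcal N *m Qcal Phi *m (Rcal N)^T.

End Defs.

Definition reachable (R : realType) n m (A : 'M[R]_n) (B : 'M[R]_(n, m)) : bool :=
  \rank (Rcal A B n) == n.
Definition observable (R : realType) n p (A : 'M[R]_n) (C : 'M[R]_(p, n)) : bool :=
  reachable A^T C^T.

(* Main.v *)
Require Import Defs.
From HB Require Import structures.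
From mathcomp Require Import all_boot all_order all_algebra.
From mathcomp Require Import boolp classical_sets reals constructive_ereal.
From mathcomp Require Import ring lra zify.
Import Order.TTheory GRing.Theory Num.Theory.
Local Open Scope ring_scope.

Set Implicit Arguments.
Unset Strict Implicit.
Unset Printing Implicit Defensive.

Section Gen.
Variable R : realType.

Definition bf k (S : 'M[R]_k) (u v : 'cV[R]_k) : R := (u^T *m S *m v) 0 0.
Definition nrm k (x : 'cV[R]_k) : R := (x^T *m x) 0 0.

Lemma bfE k (S : 'M[R]_k) u v :
  bf S u v = \sum_i \sum_j (u i 0 * S i j * v j 0).
Proof.
rewrite /bf mxE (exchange_big) /=; apply: eq_bigr => j _.
rewrite mxE mulr_suml; apply: eq_bigr => i _; by rewrite mxE.
Qed.

Lemma nrmE k (x : 'cV[R]_k) : nrm x = \sum_i x i 0 ^+ 2.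
Proof. by rewrite /nrm mxE; apply: eq_bigr => i _; rewrite mxE expr2. Qed.

Lemma nrm_ge0 k (x : 'cV[R]_k) : 0 <= nrm x.
Proof. by rewrite nrmE; apply: sumr_ge0 => i _; exact: sqr_ge0. Qed.

Lemma sqr_le_nrm k (x : 'cV[R]_k) i : x i 0 ^+ 2 <= nrm x.
Proof.
rewrite nrmE (bigD1 i) //= lerDl; apply: sumr_ge0 => j _; exact: sqr_ge0.
Qed.

Lemma nrm_eq0 k (x : 'cV[R]_k) : nrm x = 0 -> x = 0.
Proof.
move=> h; apply/matrixP => i j; rewrite (ord1 j) mxE.
have := sqr_le_nrm x i; rewrite h => h2.
have h3 : x i 0 ^+ 2 = 0 by apply/eqP; rewrite eq_le h2 sqr_ge0.
by move/eqP: h3; rewrite sqrf_eq0 => /eqP.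
Qed.

Lemma nrm_gt0 k (x : 'cV[R]_k) : x != 0 -> 0 < nrm x.
Proof.
move=> hx; rewrite lt_def nrm_ge0 andbT; apply/eqP => h.
by move: hx; rewrite (nrm_eq0 h) eqxx.
Qed.

Definition mxbound k (S : 'M[R]_k) : R := \sum_i \sum_j `|S i j|.

Lemma mxbound_ge0 k (S : 'M[R]_k) : 0 <= mxbound S.
Proof. by apply: sumr_ge0 => i _; apply: sumr_ge0 => j _. Qed.

Lemma bf_bound k (S : 'M[R]_k) x : `|bf S x x| <= mxbound S * nrm x.
Proof.
rewrite bfE /mxbound mulr_suml.
apply: le_trans (ler_norm_sum _ _ _) _; apply: ler_sum => i _.
rewrite mulr_suml.
apply: le_trans (ler_norm_sum _ _ _) _; apply: ler_sum => j _.
rewrite -mulrA (mulrC (S i j)) mulrA normrM normrM mulrC.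
apply: ler_wpM2l => //.
have hi := sqr_le_nrm x i; have hj := sqr_le_nrm x j.
rewrite -normrM.
have h0 : 0 <= (`|x i 0| - `|x j 0|) ^+ 2 by exact: sqr_ge0.
rewrite normrM.
have e1 : `|x i 0| ^+ 2 = x i 0 ^+ 2 by rewrite real_normK ?num_real.
have e2 : `|x j 0| ^+ 2 = x j 0 ^+ 2 by rewrite real_normK ?num_real.
nra.
Qed.


Lemma bf_sym k (S : 'M[R]_k) u v : S^T = S -> bf S u v = bf S v u.
Proof.
move=> hS; rewrite /bf.
have e : forall (M : 'M[R]_1), M 0 0 = M^T 0 0 by move=> M; rewrite mxE.
rewrite e.
by rewrite !trmx_mul trmxK hS mulmxA.
Qed.

Lemma bfDl k (S : 'M[R]_k) u v w : bf S (u + v) w = bf S u w + bf S v w.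
Proof. by rewrite /bf linearD /= !mulmxDl mxE. Qed.
Lemma bfDr k (S : 'M[R]_k) u v w : bf S w (u + v) = bf S w u + bf S w v.
Proof. by rewrite /bf !mulmxDr mxE. Qed.
Lemma bfZl k (S : 'M[R]_k) a u w : bf S (a *: u) w = a * bf S u w.
Proof. by rewrite /bf linearZ /= -!scalemxAl mxE. Qed.
Lemma bfZr k (S : 'M[R]_k) a u w : bf S w (a *: u) = a * bf S w u.
Proof. by rewrite /bf -!scalemxAr mxE. Qed.
Lemma bfNl k (S : 'M[R]_k) u w : bf S (- u) w = - bf S u w.
Proof. by rewrite -scaleN1r bfZl mulN1r. Qed.
Lemma bfNr k (S : 'M[R]_k) u w : bf S w (- u) = - bf S w u.
Proof. by rewrite -scaleN1r bfZr mulN1r. Qed.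


Lemma bf_expand k (S : 'M[R]_k) u v t : S^T = S ->
  bf S (u - t *: v) (u - t *: v) = bf S u u - 2 * t * bf S u v + t ^+ 2 * bf S v v.
Proof.
move=> hS; rewrite !(bfDl, bfDr, bfNl, bfNr, bfZl, bfZr) (bf_sym v u hS).
ring.
Qed.

Lemma CS k (S : 'M[R]_k) u v : S^T = S -> (forall x, 0 <= bf S x x) ->
  bf S u v ^+ 2 <= bf S u u * bf S v v.
Proof.
move=> hS hpos.
set a := bf S v v; set b := bf S u v; set c := bf S u u.
have ha : 0 <= a by apply: hpos.
have hc : 0 <= c by apply: hpos.
have hq t : 0 <= c - 2 * t * b + t ^+ 2 * a by rewrite -bf_expand.
have [a0|apos] := eqVneq a 0.
  have [b0|bn0] := eqVneq b 0.
    by rewrite b0 a0 expr0n mulr0.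
  have := hq ((c + 1) / (2 * b)); rewrite a0 mulr0 addr0.
  have -> : 2 * ((c + 1) / (2 * b)) * b = c + 1.
    by field.
  lra.
have apos' : 0 < a by rewrite lt_def apos ha.
have := hq (b / a).
have -> : c - 2 * (b / a) * b + (b / a) ^+ 2 * a = (a * c - b ^+ 2) / a.
  by field.
move=> h; have h2 := mulr_ge0 h (ltW apos').
rewrite mulfVK in h2; last by rewrite gt_eqF.
rewrite /c /a /b in h2 *; lra.
Qed.

Lemma bfB k (S1 S2 : 'M[R]_k) u v : bf (S1 - S2) u v = bf S1 u v - bf S2 u v.
Proof. by rewrite /bf mulmxBr mulmxBl !mxE. Qed.
Lemma bfD k (S1 S2 : 'M[R]_k) u v : bf (S1 + S2) u v = bf S1 u v + bf S2 u v.
Proof. by rewrite /bf mulmxDr mulmxDl mxE. Qed.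
Lemma bfN k (S : 'M[R]_k) u v : bf (- S) u v = - bf S u v.
Proof. by rewrite /bf mulmxN mulNmx !mxE. Qed.
Lemma bf_scalar k (a : R) u v : bf (a%:M : 'M_k) u v = a * (u^T *m v) 0 0.
Proof. by rewrite /bf mul_mx_scalar -scalemxAl mxE. Qed.
Lemma bf1 k (x : 'cV[R]_k) : bf 1%:M x x = nrm x.
Proof. by rewrite bf_scalar mul1r. Qed.
Lemma bf_conj a b (L : 'M[R]_(a, b)) (S : 'M[R]_a) x y :
  bf (L^T *m S *m L) x y = bf S (L *m x) (L *m y).
Proof. by rewrite /bf trmx_mul !mulmxA. Qed.


Lemma psd_bf k (P : 'M[R]_k) : psd P -> P^T = P /\ forall x, 0 <= bf P x x.
Proof. by []. Qed.

Lemma inv_sym k (P : 'M[R]_k) : P^T = P -> (invmx P)^T = invmx P.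
Proof. by move=> h; rewrite trmx_inv h. Qed.

Lemma bf_inv k (P : 'M[R]_k) x : P^T = P -> P \in unitmx ->
  bf (invmx P) x x = bf P (invmx P *m x) (invmx P *m x).
Proof.
move=> hS hu; rewrite -bf_conj inv_sym // -mulmxA mulmxV // mulmx1 //.
Qed.

Lemma psd_inv k (P : 'M[R]_k) : psd P -> psd (invmx P).
Proof.
case=> hS hp; split; first exact: inv_sym.
move=> x; case hu: (P \in unitmx).
  have h : 0 <= bf P (invmx P *m x) (invmx P *m x) := hp _.
  by rewrite -bf_inv // in h; rewrite hu.
by rewrite invmx_out ?inE ?hu //; apply: hp.
Qed.

Lemma posdef_psd k (P : 'M[R]_k) : posdef P -> psd P.
Proof.
case=> hS hp; split=> // x; have [->|hx] := eqVneq x 0.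
  by rewrite trmx0 !mul0mx mxE.
exact/ltW/hp.
Qed.

Lemma posdef_unit k (P : 'M[R]_k) : posdef P -> P \in unitmx.
Proof.
case=> hS hp; rewrite -row_free_unit; apply: inj_row_free => v hv.
apply/eqP; apply: contraT => hv0.
have hx : v^T != 0 by apply: contra hv0 => /eqP h; rewrite -[v]trmxK h linear0.
have := hp _ hx; rewrite trmxK hv mul0mx mxE ltxx //.
Qed.

Lemma posdef_inv k (P : 'M[R]_k) : posdef P -> posdef (invmx P).
Proof.
move=> hP; have hu := posdef_unit hP; case: hP => hS hp; split.
  exact: inv_sym.
move=> x hx.
have h : invmx P *m x != 0 -> 0 < bf P (invmx P *m x) (invmx P *m x) := hp _.
rewrite -bf_inv // in h; apply: h.
apply: contra hx => /eqP h; by rewrite -(mulKVmx hu x) h mulmx0.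
Qed.

Lemma coercive k (P : 'M[R]_k) : posdef P ->
  exists2 l, 0 < l & forall x, l * nrm x <= bf P x x.
Proof.
move=> hP; have hu := posdef_unit hP.
have hPi := posdef_inv hP.
case: (hP) => hS hp; case: (hPi) => hSi hpi.
set c := mxbound (invmx P).
have hc := mxbound_ge0 (invmx P).
exists (1 / (c + 1)); first by apply: divr_gt0 => //; apply: (lt_le_trans ltr01); rewrite lerDr.
move=> x; have [->|hx] := eqVneq x 0.
  by rewrite /nrm /bf trmx0 !mul0mx !mxE mulr0.
have hpx := hp x hx; have hnx := nrm_gt0 hx.
have hpix : 0 <= bf (invmx P) x x by apply/ltW/hpi.
have hcs := CS (P *m x) x hSi (psd_inv (posdef_psd hP)).2.
have e1 : bf (invmx P) (P *m x) x = nrm x.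
  by rewrite /bf /nrm trmx_mul hS -!mulmxA mulKVmx.
have e2 : bf (invmx P) (P *m x) (P *m x) = bf P x x.
  by rewrite /bf trmx_mul hS -!mulmxA mulKmx.
rewrite e1 e2 in hcs.
have hb := bf_bound (invmx P) x; rewrite -/c in hb.
have hb2 : bf (invmx P) x x <= c * nrm x by apply: le_trans (ler_norm _) hb.
have hpx' := ltW hpx.
have h3 : nrm x ^+ 2 <= bf P x x * (c * nrm x).
  by apply: le_trans hcs _; apply: ler_wpM2l.
have h4 : nrm x <= bf P x x * c.
  rewrite expr2 mulrA in h3; by rewrite -(ler_pM2r hnx).
rewrite mulrC -ler_pdivlMr; last by apply: divr_gt0 => //; apply: (lt_le_trans ltr01); rewrite lerDr.
rewrite invf_div divr1; nra.
Qed.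


Lemma bf1l k (A : 'M[R]_k) u v : bf 1%:M (A *m u) v = bf A^T u v.
Proof. by rewrite /bf mulmx1 trmx_mul. Qed.
Lemma bf1r k (A : 'M[R]_k) u v : bf 1%:M u (A *m v) = bf A u v.
Proof. by rewrite /bf mulmx1 mulmxA. Qed.

Lemma sq_bound (a b : R) : 0 <= b -> a ^+ 2 <= b ^+ 2 / 64 -> `|a| <= b / 8.
Proof.
move=> hb h; rewrite -ler_sqr ?nnegrE ?normr_ge0 ?divr_ge0 //.
have e : (8 : R) ^+ 2 = 64 by rewrite expr2; lra.
by rewrite real_normK ?num_real // expr_div_n e.
Qed.

Section Tsec.
Variables (k : nat) (Phi M : 'M[R]_k) (phi cM : R).
Hypotheses (hPs : Phi^T = Phi) (hPp : forall x, 0 <= bf Phi x x)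
  (hPb : forall x, bf Phi x x <= phi * nrm x)
  (hMs : M^T = M) (hMp : forall x, 0 <= bf M x x)
  (hMb : forall x, nrm (M *m x) <= cM * nrm x)
  (hphi : 0 <= phi) (hcM : 0 <= cM) (hsmall : phi ^+ 2 * cM <= 1 / 64).

Lemma bilin_bound u v : bf Phi u v ^+ 2 <= phi ^+ 2 * (nrm u * nrm v).
Proof.
apply: le_trans (CS u v hPs hPp) _.
have -> : phi ^+ 2 * (nrm u * nrm v) = (phi * nrm u) * (phi * nrm v) by ring.
apply: ler_pM; [exact: hPp | exact: hPp | exact: hPb | exact: hPb].
Qed.

Lemma bilinM_bound w : `|bf Phi (M *m w) w| <= nrm w / 8.
Proof.
apply: sq_bound; first exact: nrm_ge0.
apply: le_trans (bilin_bound _ _) _.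
have h1 := hMb w; have h2 := nrm_ge0 w; have h3 := nrm_ge0 (M *m w).
have hp2 : 0 <= phi ^+ 2 by exact: sqr_ge0.
have h4 : phi ^+ 2 * (nrm (M *m w) * nrm w) <= phi ^+ 2 * (cM * nrm w * nrm w).
  by apply: ler_wpM2l => //; apply: ler_wpM2r.
apply: le_trans h4 _.
have h5 : 0 <= nrm w ^+ 2 by exact: sqr_ge0.
have -> : phi ^+ 2 * (cM * nrm w * nrm w) = (phi ^+ 2 * cM) * nrm w ^+ 2 by ring.
have := ler_wpM2r h5 hsmall; lra.
Qed.

Let U := 1%:M - Phi *m M.

Lemma U_inj (x : 'cV[R]_k) : U *m x = 0 -> x = 0.
Proof.
rewrite /U mulmxBl mul1mx => hx; have e : x = Phi *m (M *m x).
  by apply/eqP; rewrite -subr_eq0 mulmxA hx.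
have h1 : nrm x = bf Phi (M *m x) x.
  by rewrite -bf1 {2}e bf1r bf_sym.
have := bilinM_bound x; rewrite -h1 => h2.
have h3 := nrm_ge0 x.
apply: nrm_eq0; move: h2; rewrite ger0_norm // => h2; lra.
Qed.

Lemma U_unit : U \in unitmx.
Proof.
rewrite -unitmx_tr -row_free_unit; apply: inj_row_free => v hv.
have : U *m v^T = 0 by rewrite -[U]trmxK -trmx_mul hv trmx0.
by move/U_inj => h; rewrite -[v]trmxK h trmx0.
Qed.

Lemma UT : U^T = 1%:M - M *m Phi.
Proof. by rewrite /U linearB /= trmx1 trmx_mul hPs hMs. Qed.

Lemma T_sym : (invmx U *m Phi)^T = invmx U *m Phi.
Proof.
have hu := U_unit; have hu' : U^T \in unitmx by rewrite unitmx_tr.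
rewrite trmx_mul trmx_inv hPs.
have e : U *m Phi = Phi *m U^T.
  by rewrite UT /U mulmxBl mulmxBr mul1mx mulmx1 mulmxA.
rewrite -[X in _ = X](mulmxK hu') -(mulmxA (invmx U)) -e mulKmx //.
Qed.

Lemma T_bound y : bf (invmx U *m Phi) y y <= 2 * phi * nrm y.
Proof.
have hu := U_unit.
set z := invmx U *m Phi *m y.
set w := y + M *m z.
have hz : z = Phi *m w.
  have : U *m z = Phi *m y by rewrite /z !mulmxA mulmxV // mul1mx.
  rewrite /U mulmxBl mul1mx => h.
  by rewrite /w mulmxDr -h mulmxA subrK.
have hy : y = w - M *m (Phi *m w) by rewrite -hz /w addrK.
have e1 : bf (invmx U *m Phi) y y = bf Phi w w - bf M (Phi *m w) (Phi *m w).
  by rewrite -bf1r -/z {1}hy hz bfDl bfNl bf1r bf1l hMs.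
have hw : w = y + M *m (Phi *m w) by rewrite -hz.
have e2 : nrm w = bf 1%:M w y + bf Phi (M *m w) w.
  rewrite -bf1 {2}hw bfDr; congr (_ + _).
  by rewrite /bf mulmx1 trmx_mul hMs !mulmxA.
have e3 : bf 1%:M w y <= nrm w / 4 + nrm y.
  have := nrm_ge0 (w - 2 *: y); rewrite -bf1 bf_expand ?trmx1 // !bf1.
  move=> h; lra.
have e4 := bilinM_bound w.
have e5 : bf Phi (M *m w) w <= nrm w / 8 by apply: le_trans (ler_norm _) e4.
have e6 : nrm w <= 2 * nrm y by have := nrm_ge0 y; lra.
have e7 := hPb w; have e8 := hMp (Phi *m w).
rewrite e1.
have e9 : phi * nrm w <= phi * (2 * nrm y) by apply: ler_wpM2l.
lra.
Qed.

End Tsec.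


Lemma psd_congr a b (Q : 'M[R]_a) (X : 'M[R]_(a, b)) : psd Q -> psd (X^T *m Q *m X).
Proof.
case=> hS hp; split; first by rewrite /symmx !trmx_mul trmxK hS mulmxA.
by move=> x; rewrite -/(bf _ x x) bf_conj; apply: hp.
Qed.

Lemma posdef_congr a b (Q : 'M[R]_a) (X : 'M[R]_(a, b)) : posdef Q ->
  (forall x : 'cV[R]_b, X *m x = 0 -> x = 0) -> posdef (X^T *m Q *m X).
Proof.
case=> hS hp hX; split; first by rewrite /symmx !trmx_mul trmxK hS mulmxA.
move=> x hx; rewrite -/(bf _ x x) bf_conj; apply: hp.
by apply: contra hx => /eqP /hX ->.
Qed.

Lemma gram a b (X : 'M[R]_(a, b)) x : bf (X *m X^T) x x = nrm (X^T *m x).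
Proof.
have -> : X *m X^T = (X^T)^T *m 1%:M *m X^T by rewrite mulmx1 trmxK.
by rewrite bf_conj bf1.
Qed.

Lemma gram_psd a b (X : 'M[R]_(a, b)) : psd (X *m X^T).
Proof.
split; first by rewrite /symmx trmx_mul trmxK.
by move=> x; rewrite -/(bf _ x x) gram; apply: nrm_ge0.
Qed.

Lemma nrm_mul_bound a b (X : 'M[R]_(a, b)) :
  exists2 c, 0 <= c & forall x, nrm (X *m x) <= c * nrm x.
Proof.
exists (mxbound (X^T *m X)); first exact: mxbound_ge0.
move=> x; rewrite -bf1 -bf_conj mulmx1.
exact: le_trans (ler_norm _) (bf_bound _ _).
Qed.

Lemma sigma1_ge0 a b (X : 'M[R]_(a, b)) : 0 <= sigma1 X.
Proof.
rewrite /sigma1; set S := (X in sup X).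
case: (pselect (has_sup S)) => h; last by rewrite sup_out.
case: (h) => [[s hs] _].
have hle : s <= sup S := sup_upper_bound h hs.
apply: le_trans hle; case: hs => e [_ ->]; exact: sqrtr_ge0.
Qed.

End Gen.

Section Blk.
Variable R : realType.

Lemma trmx_exp k (A : 'M[R]_k) j : (A ^+ j)^T = A^T ^+ j.
Proof.
elim: j => [|j IH]; first by rewrite !expr0 trmx1.
by rewrite exprS exprSr -!mulmxE trmx_mul IH.
Qed.

Lemma cast_mulr a a' b c (ea : a = a') (X : 'M[R]_(a, b)) (Y : 'M[R]_(b, c)) :
  castmx (ea, erefl b) X *m Y = castmx (ea, erefl c) (X *m Y).
Proof. by case: a' / ea; rewrite !castmx_id. Qed.

Lemma cast_mull a b c c' (ec : c = c') (Y : 'M[R]_(a, b)) (X : 'M[R]_(b, c)) :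
  Y *m castmx (erefl b, ec) X = castmx (erefl a, ec) (Y *m X).
Proof. by case: c' / ec; rewrite !castmx_id. Qed.

Lemma cast_mul2 a a' b b' c (ea : a = a') (eb : b = b') (X : 'M[R]_(a, b)) (Y : 'M[R]_(b', c)) :
  castmx (ea, eb) X *m Y = castmx (ea, erefl c) (X *m castmx (esym eb, erefl c) Y).
Proof. by case: a' / ea; case: b' / eb Y => Y; rewrite !castmx_id. Qed.

Lemma castmx_eq0 a a' b b' (e : (a = a') * (b = b')) (X : 'M[R]_(a, b)) :
  castmx e X = 0 -> X = 0.
Proof. by case: e => ea eb; case: a' / ea; case: b' / eb; rewrite castmx_id. Qed.

Lemma castmx0 a a' b b' (e : (a = a') * (b = b')) :
  castmx e (0 : 'M[R]_(a, b)) = 0.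
Proof. by case: e => ea eb; case: a' / ea; case: b' / eb; rewrite castmx_id. Qed.


Lemma obs_inj n p (A : 'M[R]_n) (C : 'M[R]_(p, n)) N :
  observable A C -> (n <= N)%N -> forall x : 'cV[R]_n, Ocal A C N *m x = 0 -> x = 0.
Proof.
move=> hobs hN x; rewrite /Ocal /blockcol cast_mulr mxcol_mul => /castmx_eq0 h.
have hi (i : 'I_N) : C *m A ^+ (N - 1 - i) *m x = 0.
  by have := congr1 (fun X => submxcol X i) h; rewrite mxcolK submxcol0.
have hf : row_free (Rcal A^T C^T n) by exact: hobs.
have : x^T *m Rcal A^T C^T n = 0.
  rewrite /Rcal /blockrow cast_mull mul_mxrow.
  rewrite -(castmx0 (erefl 1%N, sum_const_ord n p)); congr castmx.
  rewrite -mxrow0; apply: eq_mxrow => j.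
  have hj : (N - 1 - j < N)%N by have := ltn_ord j; move: hN; clear; lia.
  have := hi (Ordinal hj) => /= hz.
  have e : (N - 1 - (N - 1 - j) = j)%N.
    have := ltn_ord j; move: hN; clear; lia.
  rewrite e in hz.
  rewrite -trmx_exp -trmx_mul -trmx_mul.
  by rewrite hz trmx0.
move/eqP; rewrite mulmx_free_eq0 // => /eqP h2.
by rewrite -[x]trmxK h2 trmx0.
Qed.


Lemma reach_inj n m (A : 'M[R]_n) (B : 'M[R]_(n, m)) N :
  reachable A B -> (n <= N)%N -> forall x : 'cV[R]_n, (Rcal A B N)^T *m x = 0 -> x = 0.
Proof.
move=> hr hN x hx.
have : x^T *m Rcal A B N = 0 by rewrite -[LHS]trmxK trmx_mul trmxK hx trmx0.
rewrite /Rcal /blockrow cast_mull mul_mxrow => /castmx_eq0 h.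
have hi (i : 'I_N) : x^T *m (A ^+ i *m B) = 0.
  by have := congr1 (fun X => submxrow X i) h; rewrite mxrowK submxrow0.
have hf : row_free (Rcal A B n) by exact: hr.
have : x^T *m Rcal A B n = 0.
  rewrite /Rcal /blockrow cast_mull mul_mxrow.
  rewrite -(castmx0 (erefl 1%N, sum_const_ord n m)); congr castmx.
  rewrite -mxrow0; apply: eq_mxrow => j.
  exact: (hi (widen_ord hN j)).
move/eqP; rewrite mulmx_free_eq0 // => /eqP h2.
by rewrite -[x]trmxK h2 trmx0.
Qed.

Lemma dcal_inj m p (D : 'M[R]_(p, m)) N :
  posdef (D *m D^T) -> forall x : 'cV[R]_(N * p), (Dcal D N)^T *m x = 0 -> x = 0.
Proof.
move=> [_ hD] x; rewrite /Dcal /blockmx trmx_cast /= tr_mxblock cast_mul2.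
move/castmx_eq0.
set xx := castmx _ x.
rewrite -(submxcolK xx) mul_mxblock_mxrow => h.
have hi (i : 'I_N) : submxcol xx i = 0.
  have := congr1 (fun X => submxcol X i) h; rewrite mxcolK submxcol0.
  rewrite (bigD1 i) //= eqxx big1 ?addr0; last first.
    by move=> j hj; rewrite (negbTE hj) trmx0 mul0mx.
  move=> h2; apply/eqP; apply: contraT => hne.
  have := hD _ hne; rewrite -mulmxA -mulmxA h2 !mulmx0 mxE ltxx //.
have hxx : xx = 0.
  by rewrite -(submxcolK xx) -mxcol0; apply: eq_mxcol => i; rewrite hi.
exact: (castmx_eq0 hxx).
Qed.

End Blk.

Unset Implicit Arguments.
Set Strict Implicit.
Set Printing Implicit Defensive.


Theorem proposition1 (R : realType) (n m p : nat)
  (A : 'M[R]_n) (B : 'M[R]_(n, m)) (C : 'M[R]_(p, n)) (D : 'M[R]_(p, m))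
  (N : nat) :
  (0 < n)%N -> (0 < m)%N -> (0 < p)%N ->
  posdef (D *m D^T) -> B *m D^T = 0 ->
  reachable A B -> observable A C -> (n <= N)%N ->
  exists phiN : R,
    0 < phiN /\ (phiN%:E < phitilde A B C D N)%E /\
    forall Phi : 'M[R]_(N * n),
      symmx Phi -> loewner_le 0 Phi -> loewner_le Phi (phiN%:M) ->
      posdef (OmegaPhi A B C D Phi) /\ posdef (Wcal A B C D Phi).
Proof.
move=> hn hm hp hD _ hreach hobs hN.
set Dc := Dcal D N; set H := Hcal A B C N; set L := Lcal A B N.
set Oc := Ocal A C N; set Rc := Rcal A B N; set J := Jcal A B C D N.
set K := Kcal A B C D N; set Mc := Mcal A B C D N.
have hDD := gram_psd Dc.
have hK : posdef K /\ forall x, nrm x <= bf K x x.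
  have hKb : forall x, nrm x <= bf K x x.
    move=> x; rewrite /K /Kcal -/Dc -/H bfD bf1 bf_conj lerDl.
    exact: (psd_inv hDD).2.
  split=> //; split.
    rewrite /symmx /K /Kcal linearD /= trmx1 !trmx_mul trmxK.
    by rewrite -/Dc -/H (psd_inv hDD).1 mulmxA.
  move=> x hx; apply: lt_le_trans (hKb x); exact: nrm_gt0.
case: hK => hKpd hKb.
have hMc : psd Mc.
  have -> : Mc = L^T^T *m invmx K *m L^T by rewrite trmxK.
  exact/psd_congr/posdef_psd/posdef_inv.
have hOm : posdef (OmegaN A B C D N).
  apply: posdef_congr; last exact: obs_inj.
  apply: posdef_inv; split.
    by rewrite /symmx linearD /= -/Dc -/H (gram_psd Dc).1 (gram_psd H).1.
  move=> x hx; rewrite -/(bf _ x x) bfD !gram.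
  have h1 : Dc^T *m x != 0 by apply: contra hx => /eqP /dcal_inj -> //.
  have := nrm_gt0 h1; have := nrm_ge0 (H^T *m x); lra.
have [lam hlam hcoer] := coercive hOm.
have [cM hcM hMb] := nrm_mul_bound Mc.
have [cJ hcJ hJb] := nrm_mul_bound J.
have [cL hcL hLb] := nrm_mul_bound L.
have hs := sigma1_ge0 Mc.
set s := sigma1 Mc in hs.
set Dd := 1 + cM + cJ / lam + cL + s.
have hcJl : 0 <= cJ / lam by apply: divr_ge0 => //; exact: ltW.
have hDd : 1 <= Dd by rewrite /Dd; lra.
have hDd0 : 0 < Dd by lra.
set phiN := 1 / (8 * Dd).
have hphi0 : 0 < phiN by rewrite /phiN divr_gt0 // mulr_gt0.
have hsmall X : 0 <= X -> X <= Dd -> phiN * X <= 1 / 8.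
  move=> h0 h1; rewrite /phiN mulrC mulrA mulr1 ler_pdivrMr ?mulr_gt0 //.
  lra.
exists phiN; split => //; split.
  rewrite /phitilde -/Mc -/s; case: ifP => [_|hs0]; first exact: ltey.
  rewrite lte_fin.
  have spos : 0 < s by rewrite lt_def hs0 hs.
  rewrite -(ltr_pM2r spos) mulVf ?gt_eqF //.
  have := hsmall s hs (ltac:(rewrite /Dd; lra)); lra.
move=> Phi hsym h0 hle.
have hPp x : 0 <= bf Phi x x by have := h0.2 x; rewrite subr0.
have hPb x : bf Phi x x <= phiN * nrm x.
  by have := hle.2 x; rewrite -/(bf _ x x) bfB bf_scalar subr_ge0.
have hp8 : phiN <= 1 / 8 by have := hsmall 1 ler01 hDd; rewrite mulr1.
have hs64 : phiN ^+ 2 * cM <= 1 / 64.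
  have h1 := hsmall cM hcM (ltac:(rewrite /Dd; lra)).
  have -> : phiN ^+ 2 * cM = phiN * (phiN * cM) by ring.
  have h2 : phiN * (phiN * cM) <= 1 / 8 * (phiN * cM).
    by apply: ler_wpM2r => //; apply: mulr_ge0 => //; exact: ltW.
  lra.
have hTs := T_sym hsym hPp hPb hMc.1 hMb hs64.
have hTb := T_bound hsym hPp hPb hMc.1 hMc.2 hMb (ltW hphi0) hs64.
set T := invmx (1%:M - Phi *m Mc) *m Phi in hTs hTb.
split.
  rewrite /OmegaPhi /Sinv -/J -/Mc -/T; split.
    have hS2 : (J^T *m - T *m J)^T = J^T *m - T *m J.
      by rewrite !trmx_mul trmxK linearN /= hTs mulmxA.
    by rewrite /symmx raddfD /= hS2 hOm.1.
  move=> x hx; rewrite -/(bf _ x x) bfD bf_conj bfN.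
  have h1 := hcoer x; have h2 := hTb (J *m x); have h3 := hJb x.
  have h4 := nrm_gt0 hx.
  have h5 := hsmall (cJ / lam) hcJl (ltac:(rewrite /Dd; lra)).
  have h6 : phiN * cJ <= lam / 8.
    have -> : phiN * cJ = phiN * (cJ / lam) * lam by field; rewrite gt_eqF.
    have := ler_wpM2r (ltW hlam) h5; lra.
  have h7 : phiN * nrm (J *m x) <= phiN * (cJ * nrm x) by apply: ler_wpM2l => //; exact: ltW.
  have h8 : phiN * cJ * nrm x <= lam / 8 * nrm x by apply: ler_wpM2r => //; exact: ltW.
  have h9 : 0 < lam * nrm x by apply: mulr_gt0.
  nra.
have hKL : posdef (K - L^T *m Phi *m L).
  split.
    have hS3 : (L^T *m Phi *m L)^T = L^T *m Phi *m L.
      by rewrite !trmx_mul trmxK hsym mulmxA.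
    by rewrite /symmx raddfB /= hS3 hKpd.1.
  move=> x hx; rewrite -/(bf _ x x) bfB bf_conj.
  have h1 := hKb x; have h2 := hPb (L *m x); have h3 := hLb x.
  have h4 := nrm_gt0 hx.
  have h5 := hsmall cL hcL (ltac:(rewrite /Dd; lra)).
  have h7 : phiN * nrm (L *m x) <= phiN * (cL * nrm x) by apply: ler_wpM2l => //; exact: ltW.
  have h8 : phiN * cL * nrm x <= 1 / 8 * nrm x by apply: ler_wpM2r => //; exact: ltW.
  nra.
have := posdef_congr (posdef_inv hKL) (reach_inj hreach hN).
by rewrite trmxK.
Qed.
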